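(* Let $0<\delta\le\frac12$ be fixed. There exist constants $C_\delta>0$ and $N_\delta$ depending only on $\delta$ such that for all integers $n\ge N_\delta$ and all integers $d>1$, $$\Big|\frac1d\sum_{1\le h\le d-1}\Big(1-\delta+\delta\cos\big(\tfrac{2\pi h}{d}\big)\Big)^{n/2}\Big|\le C_\delta\,\frac{\log n}{\sqrt n}.$$ *)

(* Defs.v *)
From HB Require Import structures.
From mathcomp Require Import all_boot all_order all_algebra.
From mathcomp Require Import all_classical all_reals all_analysis.

(* Main.v *)
Require Import Defs.
From HB Require Import structures.
From mathcomp Require Import all_boot all_order all_algebra.
From mathcomp Require Import all_classical all_reals all_analysis.
From mathcomp Require Import ring lra.
Import Order.TTheory GRing.Theory Num.Theory.
Local Open Scope ring_scope.

Section S.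
Import numFieldNormedType.Exports.
Local Open Scope classical_set_scope.
Context {R : realType}.

Lemma nonneg_deriv (f df : R -> R) :
  (forall x : R, is_derive x 1 f (df x)) -> f 0 = 0 ->
  (forall x : R, 0 <= x -> 0 <= df x) -> forall x : R, 0 <= x -> 0 <= f x.
Proof.
move=> fd f0 dfp b b0.
have fc : {within `[0, b], continuous f}.
  apply: continuous_subspaceT. move=> y.
  apply: differentiable_continuous.
  by apply/derivable1_diffP; case: (fd y).
have [c cin E] := @MVT_segment R f df 0 b b0 (fun y _ => fd y) fc.
have -> : f b = df c * (b - 0) by rewrite -E f0 subr0.
rewrite subr0 mulr_ge0 //; apply: dfp.
by move: cin; rewrite in_itv /= => /andP[].
Qed.

Lemma cos_lb (x : R) : 0 <= x -> x ^+ 2 / 2 - x ^+ 4 / 24 <= 1 - cos x.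
Proof.
move=> x0.
have h1 : forall y : R, 0 <= y -> 0 <= y - sin y.
  apply: (@nonneg_deriv (fun x : R => x - sin x) (fun x : R => 1 - cos x)).
  - by rewrite sin0 subr0.
  - by move=> y _; rewrite subr_ge0 cos_le1.
have h2 : forall y : R, 0 <= y -> 0 <= y ^+ 2 / 2 - 1 + cos y.
  apply: (@nonneg_deriv (fun x : R => x ^+ 2 / 2 - 1 + cos x) (fun x : R => x - sin x)).
  - move=> y; apply: is_derive_eq.
    rewrite !scaler0 add0r subr0 /GRing.scale /= !mulr1.
    lra.
  - rewrite cos0 expr0n /=; lra.
  - by move=> y y0; exact: h1.
have h3 : forall y : R, 0 <= y -> 0 <= y ^+ 3 / 6 - y + sin y.
  apply: (@nonneg_deriv (fun x : R => x ^+ 3 / 6 - x + sin x) (fun x : R => x ^+ 2 / 2 - 1 + cos x)).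
  - move=> y; apply: is_derive_eq.
    rewrite !scaler0 /GRing.scale /= !mulr1.
    by field.
  - rewrite sin0 expr0n /=; lra.
  - by move=> y y0; exact: h2.
have h4 : forall y : R, 0 <= y -> 0 <= y ^+ 4 / 24 - y ^+ 2 / 2 + 1 - cos y.
  apply: (@nonneg_deriv (fun x : R => x ^+ 4 / 24 - x ^+ 2 / 2 + 1 - cos x) (fun x : R => x ^+ 3 / 6 - x + sin x)).
  - move=> y; apply: is_derive_eq.
    rewrite !scaler0 /GRing.scale /= !mulr1.
    by field.
  - rewrite cos0 expr0n /=; lra.
  - by move=> y y0; exact: h3.
have := h4 x x0; lra.
Qed.

Lemma cos_quad (x : R) : 0 <= x <= pi -> x ^+ 2 / 12 <= 1 - cos x.
Proof.
move=> /andP[x0 xpi].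
have pi4 : pi < 4 :> R by have := @pihalf_lt2 R; lra.
have [x2|x2] := leP x 2.
  have := cos_lb x x0.
  have y4 : x ^+ 2 <= 4.
    have -> : (4:R) = 2 ^+ 2 by rewrite expr2; lra.
    rewrite ler_sqr ?nnegrE //; lra.
  have y0 : 0 <= x ^+ 2 by rewrite sqr_ge0.
  have -> : x ^+ 4 = x ^+ 2 * x ^+ 2 by rewrite -exprD.
  move: (x ^+ 2) y4 y0 => y y4 y0; nra.
have c2 : cos x <= cos 2.
  have pi2 := @pi_ge2 R.
  rewrite le_eqVlt; apply/orP; right.
  rewrite ltr_cos // in_itv /=; apply/andP; split; lra.
have := cos_lb 2 (ler0n R 2).
have : x ^+ 2 <= 16.
  have -> : (16:R) = 4 ^+ 2 by rewrite expr2; lra.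
  rewrite ler_sqr ?nnegrE //; lra.
lra.
Qed.

Lemma powR_bound (b k : R) : 0 <= b <= 1 -> 0 <= k ->
  b `^ k <= (1 + k * (1 - b))^-1.
Proof.
move=> /andP[b0 b1] k0.
have pos : 0 < 1 + k * (1 - b) by rewrite ltr_wpDr ?mulr_ge0 // subr_ge0.
have [->|bn0] := eqVneq b 0.
  rewrite /powR eqxx subr0 mulr1.
  have [->|kn0] := eqVneq k 0; first by rewrite addr0 invr1.
  have -> : (false%:R : R) = 0 by []. by rewrite invr_ge0; lra.
have bpos : 0 < b by rewrite lt_neqAle eq_sym bn0 b0.
rewrite /powR (negbTE bn0).
apply: (@le_trans _ _ (expR (- (k * (1 - b))))).
  rewrite ler_expR -mulrN opprB ler_wpM2l //.
  have := @le_ln1Dx R (b - 1); rewrite addrCA subrr addr0; apply; lra.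
rewrite expRN lef_pV2 ?posrE ?expR_gt0 //.
exact: expR_ge1Dx.
Qed.

Lemma tele (s : R) (k : nat) : 0 < s ->
  \sum_(1 <= h < k.+1) (1 + s ^+ 2 * h%:R ^+ 2)^-1 <= 2 * k%:R / (1 + s * k%:R).
Proof.
move=> s0; elim: k => [|k IH].
  by rewrite big_geq // mulr0 mul0r.
rewrite big_nat_recr //=.
apply: (le_trans (lerD IH (lexx _))).
set u := k%:R; rewrite -[k.+1]addn1 natrD -/u.
have u0 : 0 <= u by rewrite ler0n.
have A : 0 < 1 + s * u by have := mulr_ge0 (ltW s0) u0; lra.
have B : 0 < 1 + s * (u + 1) by have := mulr_ge0 (ltW s0) u0; lra.
have C : 0 < 1 + s ^+ 2 * (u + 1) ^+ 2 by have := sqr_ge0 (s * (u + 1)); rewrite exprMn; lra.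
rewrite -subr_ge0.
have -> : 2 * (u + 1) / (1 + s * (u + 1)) - (2 * u / (1 + s * u) + (1 + s ^+ 2 * (u + 1) ^+ 2)^-1)
  = (2 * (1 + s ^+ 2 * (u + 1) ^+ 2) - (1 + s * u) * (1 + s * (u + 1))) /
    ((1 + s * u) * (1 + s * (u + 1)) * (1 + s ^+ 2 * (u + 1) ^+ 2)).
  field; have := sqr_ge0 (s * (k%:R + 1)); lra.
apply: divr_ge0; last by rewrite !mulr_ge0 // ltW.
rewrite -exprMn.
have vw : s * u <= s * (u + 1) by rewrite ler_wpM2l ?ltW //; lra.
move: A B vw; move: (s * u) (s * (u + 1)) => w v A B vw.
have h1 : 0 <= (v - w) * (1 + v) by rewrite mulr_ge0 ?subr_ge0 // ltW.
have h2 := sqr_ge0 (1 - v).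
nra.
Qed.

Lemma quad_md (d m : nat) : (0 < d)%N -> (2 * m <= d)%N ->
  (m%:R / d%:R) ^+ 2 <= 1 - cos (2 * pi * m%:R / d%:R :> R).
Proof.
move=> d0 md.
have dpos : 0 < d%:R :> R by rewrite ltr0n.
set t := m%:R / d%:R.
have t0 : 0 <= t by rewrite divr_ge0 ?ler0n.
have t1 : 2 * t <= 1.
  rewrite /t mulrA ler_pdivrMr // mul1r.
  by rewrite -natrM ler_nat.
have pi2 := @pi_ge2 R.
have -> : 2 * pi * m%:R / d%:R = 2 * pi * t by rewrite /t !mulrA.
have h := cos_quad (2 * pi * t).
have : 2 * pi * t <= pi.
  have pi0 : 0 <= pi :> R by lra.
  have := ler_wpM2l pi0 t1; lra.
move=> hle.
have x0 : 0 <= 2 * pi * t by rewrite !mulr_ge0 //; lra.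
have := h (introT andP (conj x0 hle)).
rewrite !exprMn.
have := sqr_ge0 t.
have : 4 <= (pi : R) ^+ 2 by rewrite expr2; nra.
nra.
Qed.

Lemma term_bound (delta nr : R) (d m : nat) : 0 < delta -> delta <= 2^-1 ->
  0 <= nr -> (0 < d)%N -> (2 * m <= d)%N ->
  (1 - delta + delta * cos (2 * pi * m%:R / d%:R)) `^ (nr / 2)
  <= (1 + (delta * Num.sqrt nr / d%:R) ^+ 2 * m%:R ^+ 2)^-1.
Proof.
move=> dl0 dl1 nr0 d0 md.
have q := quad_md d m d0 md.
set c := cos _ in q *.
have c1 := cos_le1 (2 * pi * m%:R / d%:R : R).
have c2 := cos_geN1 (2 * pi * m%:R / d%:R : R).
rewrite -/c in c1 c2.
have k0 : 0 <= nr / 2 by rewrite divr_ge0 //.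
apply: (le_trans (powR_bound _ _ _ k0)).
  apply/andP; split; nra.
have dpos : 0 < d%:R :> R by rewrite ltr0n.
have -> : (delta * Num.sqrt nr / d%:R) ^+ 2 * m%:R ^+ 2 = delta ^+ 2 * nr * (m%:R / d%:R) ^+ 2.
  by rewrite !exprMn sqr_sqrtr //; ring.
move: q; set t := (m%:R / d%:R) ^+ 2 => q.
have t0 : 0 <= t by rewrite /t sqr_ge0.
rewrite lef_pV2 ?posrE.
- have h1 : 0 <= nr * (1 - c - t) by rewrite mulr_ge0 // subr_ge0.
  have h2 : 0 <= nr * t by rewrite mulr_ge0.
  have h3 : 0 <= delta * (nr * t) * (2^-1 - delta).
    apply: mulr_ge0; [exact: mulr_ge0 (ltW dl0) h2 | lra].
  have h4 : 0 <= delta * (nr * (1 - c - t)) by exact: mulr_ge0 (ltW dl0) h1.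
  rewrite lerD2l.
  nra.
- have p2 : 0 <= 1 - (1 - delta + delta * c) by nra.
  have := mulr_ge0 k0 p2; lra.
- have := mulr_ge0 (mulr_ge0 (sqr_ge0 delta) nr0) t0; lra.
Qed.

Lemma cos_sym (d h : nat) : (0 < d)%N -> (h <= d)%N ->
  cos (2 * pi * (d - h)%:R / d%:R) = cos (2 * pi * h%:R / d%:R :> R).
Proof.
move=> d0 hd.
have dpos : 0 < d%:R :> R by rewrite ltr0n.
rewrite natrB //.
have -> : 2 * pi * (d%:R - h%:R) / d%:R = - (2 * pi * h%:R / d%:R) + pi *+ 2 :> R.
  by rewrite -mulr_natr; field; rewrite gt_eqF.
by rewrite cosD2pi cosN.
Qed.

Lemma term_bound2 (delta nr : R) (d h : nat) : 0 < delta -> delta <= 2^-1 ->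
  0 <= nr -> (h < d)%N ->
  (1 - delta + delta * cos (2 * pi * h%:R / d%:R)) `^ (nr / 2)
  <= (1 + (delta * Num.sqrt nr / d%:R) ^+ 2 * h%:R ^+ 2)^-1
   + (1 + (delta * Num.sqrt nr / d%:R) ^+ 2 * (d - h)%:R ^+ 2)^-1.
Proof.
move=> dl0 dl1 nr0 hd.
have d0 : (0 < d)%N by apply: leq_ltn_trans hd.
have F0 : forall m : nat, 0 <= (1 + (delta * Num.sqrt nr / d%:R) ^+ 2 * m%:R ^+ 2)^-1.
  move=> m; rewrite invr_ge0.
  have := mulr_ge0 (sqr_ge0 (delta * Num.sqrt nr / d%:R)) (sqr_ge0 (m%:R : R)); lra.
have [h2|h2] := leqP (2 * h) d.
  rewrite -[X in X <= _]addr0; apply: lerD; last exact: F0.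
  exact: term_bound.
rewrite -(cos_sym d h d0 (ltnW hd)).
rewrite -[X in X <= _]add0r; apply: lerD; first exact: F0.
apply: term_bound => //.
rewrite mulnBr; apply: leq_trans (leq_sub2l _ (ltnW h2)) _.
by rewrite mul2n -addnn addnK.
Qed.
End S.

Theorem lemma2p2 (R : realType) (delta : R)
  (hd0 : 0 < delta) (hd1 : delta <= 2^-1) :
  exists C : R, 0 < C /\
  exists N : nat, forall n d : nat, (N <= n)%N -> (1 < d)%N ->
    `| d%:R^-1 * \sum_(1 <= h < d)
         (1 - delta + delta * cos (2 * pi * h%:R / d%:R)) `^ (n%:R / 2) |
    <= C * ln (n%:R : R) / Num.sqrt (n%:R : R).
Proof.
exists (8 / delta); split; first by rewrite divr_gt0.
exists 4%N => n d n4 d1.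
set nr : R := n%:R.
have nr4 : 4 <= nr by rewrite /nr (_ : (4 : R) = 4%:R) // ler_nat.
have nr0 : 0 < nr by lra.
have sq0 : 0 < Num.sqrt nr by rewrite sqrtr_gt0.
have dpos : 0 < d%:R :> R by rewrite ltr0n; apply: ltn_trans d1.
set s := delta * Num.sqrt nr / d%:R.
have s0 : 0 < s by rewrite /s divr_gt0 ?mulr_gt0.
set F := fun m : nat => (1 + s ^+ 2 * m%:R ^+ 2)^-1.
set S := \sum_(1 <= h < d) _.
have S0 : 0 <= S by apply: sumr_ge0 => i _; apply: powR_ge0.
have SF : S <= \sum_(1 <= h < d) (F h + F (d - h)%N).
  apply: ler_sum_nat => i /andP[_ id].
  exact: term_bound2 (ltW nr0) id.
rewrite big_split /= in SF.
have rev : \sum_(1 <= h < d) F (d - h)%N = \sum_(1 <= h < d) F h.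
  rewrite [RHS]big_nat_rev; apply: eq_bigr => i _.
  by rewrite add1n subSS.
rewrite rev in SF.
have FS : \sum_(1 <= h < d) F h <= 2 / s.
  have -> : d = (d.-1).+1 by rewrite prednK //; apply: ltn_trans d1.
  apply: (le_trans (tele _ _ s0)).
  set k := (d.-1)%:R.
  have k0 : 0 <= k by rewrite ler0n.
  rewrite ler_pdivrMr; last by have := mulr_ge0 (ltW s0) k0; lra.
  have -> : 2 / s * (1 + s * k) = 2 / s + 2 * k by field; rewrite gt_eqF.
  have : 0 < 2 / s by rewrite divr_gt0.
  lra.
have lnb : 2^-1 <= ln nr.
  have h := @le_ln1Dx R (nr^-1 - 1).
  have ninv : 0 < nr^-1 by rewrite invr_gt0.
  have ninv4 : nr^-1 <= 4^-1 by rewrite lef_pV2 ?posrE //; lra.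
  rewrite addrCA subrr addr0 lnV ?posrE // in h.
  have := h ltac:(lra); lra.
rewrite ger0_norm; last by rewrite mulr_ge0 // invr_ge0 ltW.
apply: (@le_trans _ _ (d%:R^-1 * (4 / s))).
  by rewrite ler_pM2l ?invr_gt0 //; lra.
set q := (delta * Num.sqrt nr)^-1.
have q0 : 0 < q by rewrite invr_gt0 mulr_gt0.
have -> : d%:R^-1 * (4 / s) = 4 * q.
  by rewrite /s /q; field; rewrite ?gt_eqF //.
have -> : 8 / delta * ln nr / Num.sqrt nr = 8 * ln nr * q.
  by rewrite /q; field; rewrite ?gt_eqF //.
nra.
Qed.
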